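(* In the setting described in the context, let $(\rho,y,x)$ together with symmetric matrices $W^1,\dots,W^m\in\mathbb{S}^n$ satisfy the constraints defining $\mathcal{R}_{\mathrm{QP}}$. Then for each $i\in[m]$, \[ \begin{pmatrix}\rho^i&(y^i)^\top\\ y^i&W^i\end{pmatrix}\succeq0 \quad\Longleftrightarrow\quad \begin{pmatrix}a_{i0}+a_i^\top x&1&x^\top\\ 1&\rho^i&(y^i)^\top\\ x&y^i&W^i\end{pmatrix}\succeq0 . \] Consequently, adding either family of constraints (over all $i\in[m]$) to $\mathcal{R}_{\mathrm{QP}}$ yields the same set.
   Context: Let $m,n,p$ be integers with $0\le p\le n$, $a_{i0}\in\mathbb{R}$, $a_i\in\mathbb{R}^n$ ($i\in[m]$), and let $\bar Cx\le\bar d$ be a linear system that includes $0\le x_j\le1$ for $j\in[p]$, with $P=\{x\mid\bar Cx\le\bar d\}$ nonempty and bounded and $a_{i0}+a_i^\top x>0$ on $P$. The constraints defining $\mathcal{R}_{\mathrm{QP}}$ on $(\rho,y,x,W^1,\dots,W^m)$, with $\rho=(\rho^i)$, $y=(y^i)$, $y^i\in\mathbb{R}^n$, are, for all $i\in[m]$: $\bar CW^i\bar C^\top-\bar d(y^i)^\top\bar C^\top-\bar Cy^i\bar d^\top+\rho^i\bar d\bar d^\top\ge0$ (entrywise); $a_{i0}\rho^i+a_i^\top y^i=1$; $\rho^i\ge0$; $x_j=a_{i0}y^i_j+\sum_{k=1}^na_{ik}W^i_{jk}$ for $j\in[n]$; $\bar Cy^i\le\rho^i\bar d$; $W^i_{jj}=y^i_j$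 for $j\in[p]$; and $\bar Cx\le\bar d$. $\mathbb{S}^n$ denotes symmetric matrices and $\succeq0$ positive semidefiniteness. *)

(* Defs.v *)
From HB Require Import structures.
From mathcomp Require Import all_boot all_order all_algebra.
Set Implicit Arguments. Unset Strict Implicit. Unset Printing Implicit Defensive.
Import Order.TTheory GRing.Theory Num.Theory.
Local Open Scope ring_scope.

Definition psd (R : realFieldType) (k : nat) (M : 'M[R]_k) : Prop :=
  M^T = M /\ forall v : 'rV[R]_k, 0 <= (v *m M *m v^T) 0 0.

Definition cvle (R : realFieldType) (k : nat) (u w : 'cV[R]_k) : Prop :=
  forall r, u r 0 <= w r 0.

Definition inP (R : realFieldType) (k n : nat) (C : 'M[R]_(k, n)) (d : 'cV[R]_k)
  (x : 'cV[R]_n) : Prop := cvle (C *m x) d.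

Definition dotv (R : realFieldType) (n : nat) (a x : 'cV[R]_n) : R := (a^T *m x) 0 0.

Definition in_RQP (R : realFieldType) (m n p k : nat)
  (C : 'M[R]_(k, n)) (d : 'cV[R]_k) (a0 : 'I_m -> R) (a : 'I_m -> 'cV[R]_n)
  (rho : 'I_m -> R) (y : 'I_m -> 'cV[R]_n) (x : 'cV[R]_n) (W : 'I_m -> 'M[R]_n)
  : Prop :=
  (forall i, (W i)^T = W i) /\
  (forall i, forall r s : 'I_k,
     0 <= (C *m W i *m C^T - d *m (y i)^T *m C^T - C *m y i *m d^T
           + rho i *: (d *m d^T)) r s) /\
  (forall i, a0 i * rho i + dotv (a i) (y i) = 1) /\
  (forall i, 0 <= rho i) /\
  (forall i, forall j : 'I_n,
     x j 0 = a0 i * y i j 0 + \sum_(l < n) a i l 0 * W i j l) /\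
  (forall i, cvle (C *m y i) (rho i *: d)) /\
  (forall i, forall j : 'I_n, (j < p)%N -> W i j j = y i j 0) /\
  inP C d x.

Definition mat2 (R : realFieldType) (n : nat) (rho : R) (y : 'cV[R]_n)
  (W : 'M[R]_n) : 'M[R]_(1 + n) :=
  block_mx (rho%:M : 'M[R]_1) y^T y W.

Definition mat3 (R : realFieldType) (n : nat) (c rho : R) (x y : 'cV[R]_n)
  (W : 'M[R]_n) : 'M[R]_((1 + 1) + n) :=
  block_mx (block_mx (c%:M : 'M[R]_1) 1 1 (rho%:M : 'M[R]_1))
           (col_mx x^T y^T) (row_mx x y) W.

(* Main.v *)
Require Import Defs.
From HB Require Import structures.
From mathcomp Require Import all_boot all_order all_algebra.
Import Order.TTheory GRing.Theory Num.Theory.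
Local Open Scope ring_scope.

Set Implicit Arguments. Unset Strict Implicit.
Lemma psd_congr (R : realFieldType) (k l : nat) (M : 'M[R]_k) (P : 'M[R]_(k, l)) :
  psd M -> psd (P^T *m M *m P).
Proof.
move=> [HS HQ]; split.
  by rewrite !trmx_mul trmxK HS mulmxA.
move=> v; have := HQ (v *m P^T).
by rewrite trmx_mul trmxK !mulmxA.
Qed.

Definition Tm (R : realFieldType) n (a0 : R) (a : 'cV[R]_n) : 'M[R]_(1 + n, (1 + 1) + n) :=
  block_mx (row_mx (a0%:M : 'M[R]_1) 1) 0 (row_mx a 0) 1.

Definition Sm (R : realFieldType) n : 'M[R]_((1 + 1) + n, 1 + n) :=
  block_mx (col_mx (0 : 'M[R]_1) 1) 0 0 1.

Lemma TS (R : realFieldType) n (a0 : R) (a : 'cV[R]_n) : Tm a0 a *m Sm R n = 1%:M.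
Proof.
rewrite /Tm /Sm mulmx_block !mul_row_col !mulmx0 !mul0mx ?mulmx1 ?mul1mx ?addr0 ?add0r.
by rewrite -scalar_mx_block.
Qed.

Lemma key (R : realFieldType) n (a0 rho: R) (a x y : 'cV[R]_n) (W : 'M[R]_n) :
 W^T = W -> x = a0 *: y + W *m a -> a0 * rho + dotv a y = 1 ->
 mat3 (a0 + dotv a x) rho x y W = (Tm a0 a)^T *m mat2 rho y W *m Tm a0 a.
Proof.
move=> HW Hx Hr.
rewrite /mat3 /mat2 /Tm tr_block_mx !tr_row_mx !trmx0 !trmx1.
rewrite !mulmx_block.
rewrite ?mul_col_row.
rewrite !mulmx0 !mul0mx ?mulmx1 ?mul1mx ?addr0 ?add0r.
rewrite tr_scalar_mx !mul_col_mx !mul_mx_row !add_col_mx !add_row_mx !mul_col_mx ?mul_row_col !mul0mx !mul1mx !mul_mx_scalar ?mul_scalar_mx !mulmx0 ?mul0mx !addr0 ?add0r.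
have dotE (u v : 'cV[R]_n) : u^T *m v = (dotv u v)%:M by rewrite [LHS]mx11_scalar.
have dotC (u v : 'cV[R]_n) : u^T *m v = v^T *m u.
  by rewrite -[u^T *m v]trmxK trmx_mul trmxK [(v^T *m u)]dotE tr_scalar_mx.
have HxT : x^T = a0 *: y^T + a^T *m W.
  by rewrite Hx linearD /= linearZ /= trmx_mul HW.
rewrite -HxT ?scale1r ?addr0.
rewrite -Hx [block_mx (_%:M) _ _ _]block_mxEh.
congr block_mx; congr row_mx; rewrite add_col_mx; congr col_mx.
- rewrite (dotC x a) !dotE !scale_scalar_mx -!raddfD /=.
  by rewrite (mulrC rho a0) Hr scale_scalar_mx mulr1 -raddfD.
- by rewrite (dotC y a) dotE scale_scalar_mx -raddfD /= Hr.
- by rewrite dotE scale_scalar_mx -raddfD /= mulrC Hr addr0.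
- by rewrite addr0.
Qed.

Theorem proposition7 (R : realFieldType) (m n p k : nat)
  (a0 : 'I_m -> R) (a : 'I_m -> 'cV[R]_n)
  (C : 'M[R]_(k, n)) (d : 'cV[R]_k)
  (Hpn : (p <= n)%N)
  (* the system contains 0 <= x_j <= 1 for j in [p] *)
  (Hbox : forall j : 'I_n, (j < p)%N ->
     (exists r : 'I_k, row r C = - (delta_mx 0 j) /\ d r 0 = 0) /\
     (exists r : 'I_k, row r C = delta_mx 0 j /\ d r 0 = 1))
  (* P nonempty and bounded *)
  (Hne : exists x : 'cV[R]_n, inP C d x)
  (Hbd : exists B : R, forall x : 'cV[R]_n, inP C d x -> forall j, `|x j 0| <= B)
  (* a_{i0} + a_i^T x > 0 on P *)
  (Hpos : forall i (x : 'cV[R]_n), inP C d x -> 0 < a0 i + dotv (a i) x) :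
  (forall rho y x W, in_RQP p C d a0 a rho y x W ->
     forall i, psd (mat2 (rho i) (y i) (W i)) <->
               psd (mat3 (a0 i + dotv (a i) x) (rho i) x (y i) (W i)))
  /\
  (forall rho y x W,
     (in_RQP p C d a0 a rho y x W /\ forall i, psd (mat2 (rho i) (y i) (W i))) <->
     (in_RQP p C d a0 a rho y x W /\
        forall i, psd (mat3 (a0 i + dotv (a i) x) (rho i) x (y i) (W i)))).
Proof.
Proof.
have part1 : forall rho y x W, in_RQP p C d a0 a rho y x W ->
     forall i, psd (mat2 (rho i) (y i) (W i)) <->
               psd (mat3 (a0 i + dotv (a i) x) (rho i) x (y i) (W i)).
  move=> rho y x W [HW [_ [Hr [_ [Hx _]]]]] i.
  have Hx' : x = a0 i *: y i + W i *m a i.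
    apply/matrixP => j l; rewrite (ord1 l) (Hx i j) !mxE.
    congr (_ + _); apply: eq_bigr => l' _; by rewrite mulrC.
  have E := key (HW i) Hx' (Hr i).
  split=> H; first by rewrite E; apply: psd_congr.
  have -> : mat2 (rho i) (y i) (W i) =
      (Sm R n)^T *m mat3 (a0 i + dotv (a i) x) (rho i) x (y i) (W i) *m Sm R n.
    rewrite E; set T := Tm _ _; set M := mat2 _ _ _.
    have -> : (Sm R n)^T *m (T^T *m M *m T) *m Sm R n = (T *m Sm R n)^T *m M *m (T *m Sm R n).
      by rewrite trmx_mul !mulmxA.
    by rewrite TS trmx1 mul1mx mulmx1.
  exact: psd_congr.
split; first exact: part1.
move=> rho y x W; split=> -[H1 H2]; split=> // i; by apply/(part1 _ _ _ _ H1).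
Qed.
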